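(* Fix $T>0$, $C_0>0$ and $\gamma>0$, and suppose (A3), (A4) hold. On the event $\{\|\mathbf X\|_{op}\le C_0\}$ there is a constant $C>0$, depending on $T$, $C_0$ (and on $\beta,\delta$ and the constants in (A3)–(A4)) but not on $\gamma$ or on $n,d$, such that for every realization of the noise, $$\max_{0\le s\le t\le T/\gamma}\max_{j\in[d]}\Big[\big\|\partial_\varepsilon|_{\varepsilon=0}\boldsymbol\theta^{t,(s,j),\varepsilon}\big\|+\sqrt d\,\big\|\partial_\varepsilon|_{\varepsilon=0}\widehat\alpha^{t,(s,j),\varepsilon}\big\|\Big]\le C\gamma,$$ $$\max_{0\le s\le t\le T/\gamma}\max_{i\in[n]}\Big[\big\|\partial_\varepsilon|_{\varepsilon=0}\boldsymbol\theta^{t,[s,i],\varepsilon}\big\|+\sqrt d\,\big\|\partial_\varepsilon|_{\varepsilon=0}\widehat\alpha^{t,[s,i],\varepsilon}\big\|\Big]\le C\gamma,$$ where $s,t$ range over integers.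
   Context: (A3) $s:\mathbb R\times\mathbb R^K\to\mathbb R$ is $C^2$ with $|s(\theta,\alpha)|\le C(1+|\theta|+\|\alpha\|)$ and $\|\nabla_{(\theta,\alpha)}s\|_2,\|\nabla^2_{(\theta,\alpha)}s\|_{op}\le C$. (A4) $\mathcal G:\mathbb R^K\times\mathcal P_2(\mathbb R)\to\mathbb R^K$ satisfies $\|\mathcal G(\alpha,\mathsf P)\|\le C(1+\|\alpha\|+(\mathbb E_{\mathsf P}\theta^2)^{1/2})$, $\|\mathcal G(\alpha,\mathsf P)-\mathcal G(\alpha',\mathsf P')\|\le C(\|\alpha-\alpha'\|+W_2(\mathsf P,\mathsf P'))$, and with $\widehat{\mathsf P}(\boldsymbol\theta)=\frac1d\sum_j\delta_{\theta_j}$ each $(\boldsymbol\theta,\alpha)\mapsto\mathcal G_k(\alpha,\widehat{\mathsf P}(\boldsymbol\theta))$ is $C^2$ with $\|\nabla_\alpha\mathcal G_k\|\le C$, $\sqrt d\|\nabla_{\boldsymbol\theta}\mathcal G_k\|\le C$, $d\|\nabla^2_{\boldsymbol\theta}\mathcal G_k\|_{op}\le C$, $\sqrt d\|\nabla_{\boldsymbol\theta}\nabla_\alpha\mathcal G_k\|_{op}\le C$, $\|\nabla^2_\alpha\mathcal G_k\|_{op}\le C$, with $C$ independent of $d$. Here $\mathbf X\in\mathbb R^{n\times d}$, $\mathbf y\in\mathbb R^n$, $\beta\in\mathbb R$, with $n/d$ bounded. Perturbed discrete dynamics. For integer $s\ge0$, $j\in[d]$, $\varepsilon\in\mathbb R$: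 $\boldsymbol\theta^{t+1,(s,j),\varepsilon}=\boldsymbol\theta^{t,(s,j),\varepsilon}-\gamma[\beta\mathbf X^\top(\mathbf X\boldsymbol\theta^{t,(s,j),\varepsilon}-\mathbf y)-(s(\theta^{t,(s,j),\varepsilon}_k,\widehat\alpha^{t,(s,j),\varepsilon}))_k-\varepsilon\mathbf e_j\mathbf 1_{t=s}]+\sqrt2(\mathbf b^{t+1}-\mathbf b^t)$, $\widehat\alpha^{t+1,(s,j),\varepsilon}=\widehat\alpha^{t,(s,j),\varepsilon}+\gamma\mathcal G(\widehat\alpha^{t,(s,j),\varepsilon},\widehat{\mathsf P}(\boldsymbol\theta^{t,(s,j),\varepsilon}))$. For $i\in[n]$, $(\boldsymbol\theta^{t,[s,i],\varepsilon},\widehat\alpha^{t,[s,i],\varepsilon})$ is defined identically with $\varepsilon\mathbf e_j$ replaced by $\varepsilon\mathbf X^\top\mathbf e_i$. All start from the same initial condition $(\boldsymbol\theta^0,\widehat\alpha^0)$ and use the same noise $\mathbf b^t$ (with $\mathbf b^0=0$ and increments $\mathcal N(0,\gamma\mathbf I_d)$). Here $\mathbf e_j$ denotes the $j$-th standard basis vector. *)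

(* Defs.v *)
From HB Require Import structures.
From mathcomp Require Import all_boot all_order all_algebra.
From mathcomp Require Import all_classical all_reals all_analysis.
Import Order.TTheory GRing.Theory Num.Theory numFieldNormedType.Exports.

Set Implicit Arguments.
Unset Strict Implicit.
Unset Printing Implicit Defensive.

Local Open Scope classical_set_scope.
Local Open Scope ring_scope.

Section Defs.
Variable R : realType.

Definition enorm (m : nat) (v : 'cV[R]_m) : R := Num.sqrt (\sum_(i < m) v i 0 ^+ 2).

Definition opnorm (m n : nat) (A : 'M[R]_(m, n)) : R :=
  sup [set enorm (A *m v) | v in [set v : 'cV[R]_n | enorm v <= 1]].

Definition evec (m : nat) (i : 'I_m) : 'cV[R]_m := delta_mx i 0.

Definition pder (m : nat) (i : 'I_m) (f : 'cV[R]_m -> R) (x : 'cV[R]_m) : R :=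
  'D_(evec i) f x.

Definition C2 (m : nat) (f : 'cV[R]_m -> R) : Prop :=
  [/\ (forall x i, derivable f x (evec i)),
      (forall i, continuous (pder i f)),
      (forall x i j, derivable (pder i f) x (evec j)) &
      (forall i j, continuous (pder j (pder i f)))].

Definition grad (m : nat) (f : 'cV[R]_m -> R) (x : 'cV[R]_m) : 'cV[R]_m :=
  \col_i pder i f x.
Definition hess (m : nat) (f : 'cV[R]_m -> R) (x : 'cV[R]_m) : 'M[R]_m :=
  \matrix_(i, j) pder j (pder i f) x.

Definition second_moment (P : {measure set R -> \bar R}) : \bar R :=
  (\int[P]_x ((x ^+ 2)%:E))%E.

Definition inP2 (P : {measure set R -> \bar R}) : Prop :=
  P setT = 1%E /\ (second_moment P < +oo)%E.

Definition esqrt (x : \bar R) : \bar R :=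
  match x with
  | EFin r => (Num.sqrt r)%:E
  | EPInf => +oo%E
  | ENInf => 0%E
  end.

Definition coupling (P Q : {measure set R -> \bar R})
    (pi : {measure set (R * R)%type -> \bar R}) : Prop :=
  pi setT = 1%E /\
  (forall A : set R, measurable A -> pi (A `*` [set: R]) = P A) /\
  (forall B : set R, measurable B -> pi ([set: R] `*` B) = Q B).

Definition W2 (P Q : {measure set R -> \bar R}) : \bar R :=
  esqrt (ereal_inf [set (\int[pi]_z (((z.1 - z.2) ^+ 2)%:E))%E
                   | pi in coupling P Q]).

Definition empirical (d : nat) (th : 'cV[R]_d) : {measure set R -> \bar R} :=
  mscale (d%:R^-1 : R)%:nng
    (msum (fun k : nat => (\d_(nth 0 [seq th j 0 | j : 'I_d] k) : {measure set R -> \bar R})) d).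

Definition svec (K d : nat) (s : R -> 'cV[R]_K -> R) (th : 'cV[R]_d) (al : 'cV[R]_K)
  : 'cV[R]_d := \col_k s (th k 0) al.

Definition sjoint (K : nat) (s : R -> 'cV[R]_K -> R) (z : 'cV[R]_(1 + K)) : R :=
  s (usubmx z 0 0) (dsubmx z).

Definition Gjoint (K d : nat)
  (G : 'cV[R]_K -> {measure set R -> \bar R} -> 'cV[R]_K) (k : 'I_K)
  (z : 'cV[R]_(d + K)) : R :=
  G (dsubmx z) (empirical (usubmx z)) k 0.

Definition A3 (K : nat) (CA : R) (s : R -> 'cV[R]_K -> R) : Prop :=
  [/\ C2 (sjoint s),
      (forall th al, `|s th al| <= CA * (1 + `|th| + enorm al)),
      (forall z, enorm (grad (sjoint s) z) <= CA) &
      (forall z, opnorm (hess (sjoint s) z) <= CA)].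

Definition A4 (K : nat) (CA : R)
  (G : 'cV[R]_K -> {measure set R -> \bar R} -> 'cV[R]_K) : Prop :=
  [/\ (forall al P, inP2 P ->
         ((enorm (G al P))%:E <= CA%:E * (1 + (enorm al)%:E + esqrt (second_moment P)))%E),
      (forall al al' P P', inP2 P -> inP2 P' ->
         ((enorm (G al P - G al' P'))%:E <= CA%:E * ((enorm (al - al'))%:E + W2 P P'))%E) &
      (forall (d : nat) (k : 'I_K), (0 < d)%N ->
         let f := @Gjoint K d G k in
         C2 f /\
         [/\ forall z, enorm (dsubmx (grad f z)) <= CA,
             forall z, Num.sqrt d%:R * enorm (usubmx (grad f z)) <= CA,
             forall z, d%:R * opnorm (ulsubmx (hess f z)) <= CA,
             forall z, Num.sqrt d%:R * opnorm (ursubmx (hess f z)) <= CA &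
             forall z, opnorm (drsubmx (hess f z)) <= CA])].

(** Perturbed discrete dynamics, perturbation direction u injected at time s0
    with size eps. Returns (theta^t, alpha^t). *)
Fixpoint dyn (n d K : nat) (X : 'M[R]_(n, d)) (y : 'cV[R]_n) (beta gamma : R)
  (s : R -> 'cV[R]_K -> R) (G : 'cV[R]_K -> {measure set R -> \bar R} -> 'cV[R]_K)
  (b : nat -> 'cV[R]_d) (th0 : 'cV[R]_d) (al0 : 'cV[R]_K)
  (u : 'cV[R]_d) (s0 : nat) (eps : R) (t : nat) : 'cV[R]_d * 'cV[R]_K :=
  match t with
  | 0%N => (th0, al0)
  | t'.+1 =>
    let: (th, al) := dyn X y beta gamma s G b th0 al0 u s0 eps t' in
    (th - gamma *: (beta *: (X^T *m (X *m th - y)) - svec s th al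
                    - (if t' == s0 then eps *: u else 0))
        + Num.sqrt 2 *: (b t'.+1 - b t'),
     al + gamma *: G al (empirical th))
  end.

End Defs.
Arguments evec {R m} i.

(* Main.v *)
Require Import Defs.
From HB Require Import structures.
From mathcomp Require Import all_boot all_order all_algebra.
From mathcomp Require Import all_classical all_reals all_analysis.
Import Order.TTheory GRing.Theory Num.Theory numFieldNormedType.Exports.
From mathcomp Require Import measurable_realfun.
From mathcomp Require Import ring lra.
Set Implicit Arguments. Unset Strict Implicit.
Local Open Scope classical_set_scope.
Local Open Scope ring_scope.

Section M.
Variable R : realType.
Definition coup (d : nat) (th th' : 'cV[R]_d) : {measure set (R * R)%type -> \bar R} :=
  mscale (d%:R^-1 : R)%:nng
    (msum (fun k : nat => (\d_(nth 0 [seq th j 0 | j : 'I_d] k, nth 0 [seq th' j 0 | j : 'I_d] k) : {measure set (R*R)%type -> \bar R})) d).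
Local Open Scope ereal_scope.
Lemma mf_sq : measurable_fun [set: R] (EFin \o (fun x : R => (x ^+ 2)%R)).
Proof. apply/measurable_EFinP; exact: measurable_funX. Qed.

Lemma mf_sq2 : measurable_fun [set: R * R] (EFin \o (fun z : R * R => ((z.1 - z.2) ^+ 2)%R)).
Proof.
apply/measurable_EFinP; apply: measurable_funX; apply: measurable_funB.
exact: measurable_fst. exact: measurable_snd.
Qed.

Lemma empE d (th : 'cV[R]_d) A : empirical th A = ((d%:R^-1)%R)%:E * \sum_(k < d) ((nth 0 [seq th j 0 | j : 'I_d] k \in A)%:R)%:E.
Proof.
rewrite /empirical /= /mscale /msum /=; try (congr (_ * _); apply: eq_bigr => k _; by rewrite diracE).
Qed.
Lemma coupE d (th th' : 'cV[R]_d) A : coup th th' A = ((d%:R^-1)%R)%:E * \sum_(k < d) (((nth 0 [seq th j 0 | j : 'I_d] k, nth 0 [seq th' j 0 | j : 'I_d] k) \in A)%:R)%:E.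
Proof.
rewrite /coup /= /mscale /msum /=; try (congr (_ * _); apply: eq_bigr => k _; by rewrite diracE).
Qed.
End M.
Section M2.
Variable R : realType.
Local Open Scope ereal_scope.
Lemma int_emp d (th : 'cV[R]_d) (f : R -> \bar R) : measurable_fun setT f -> (forall x, 0 <= f x) ->
  \int[empirical th]_x f x = ((d%:R^-1)%R)%:E * \sum_(k < d) f (nth 0 [seq th j 0 | j : 'I_d] k)%R.
Proof.
move=> mf f0.
rewrite /empirical ge0_integral_mscale //; congr (_ * _).
rewrite ge0_integral_measure_sum //; apply: eq_bigr => k _.
rewrite integral_dirac // diracE in_setT mul1e //.
Qed.
End M2.
Section M3.
Variable R : realType.
Lemma nthE d (th : 'cV[R]_d) (k : 'I_d) : nth 0 [seq th j 0 | j : 'I_d] k = th k 0.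
Proof. by rewrite (nth_map k) ?size_enum_ord // nth_ord_enum. Qed.
Lemma inX1 (A : set R) (a b : R) : ((a, b) \in A `*` setT) = (a \in A).
Proof. by apply/idP/idP; rewrite !inE /=; [case|split]. Qed.
Lemma inX2 (A : set R) (a b : R) : ((a, b) \in setT `*` A) = (b \in A).
Proof. by apply/idP/idP; rewrite !inE /=; [case|split]. Qed.
End M3.
Section M4.
Variable R : realType.
Local Open Scope ereal_scope.
Lemma sum1E d : \sum_(k < d) (1%R)%:E = (d%:R)%:E :> \bar R.
Proof. by rewrite sumEFin sumr_const card_ord. Qed.

Lemma coup_ok d (th th' : 'cV[R]_d) : (0 < d)%N ->
  coupling (empirical th) (empirical th') (coup th th').
Proof.
move=> d0; split; [|split].
- rewrite coupE. under eq_bigr do rewrite in_setT.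
  by rewrite sum1E -EFinM mulVf // pnatr_eq0 -lt0n.
- move=> A _; rewrite coupE empE; congr (_ * _); apply: eq_bigr => k _.
  by rewrite inX1.
- move=> A _; rewrite coupE empE; congr (_ * _); apply: eq_bigr => k _.
  by rewrite inX2.
Qed.

Lemma int_coup d (th th' : 'cV[R]_d) (f : (R * R)%type -> \bar R) : measurable_fun setT f -> (forall x, 0 <= f x) ->
  \int[coup th th']_x f x = ((d%:R^-1)%R)%:E * \sum_(k < d) f (th k 0, th' k 0)%R.
Proof.
move=> mf f0.
rewrite /coup ge0_integral_mscale //; congr (_ * _).
rewrite ge0_integral_measure_sum //; apply: eq_bigr => k _.
rewrite integral_dirac // diracE in_setT mul1e.
have := ltn_ord k; case: k => k kd /= _.
by rewrite !(nthE _ (Ordinal kd)).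
Qed.

Lemma inP2_emp d (th : 'cV[R]_d) : (0 < d)%N -> inP2 (empirical th).
Proof.
move=> d0; split.
- rewrite empE. under eq_bigr do rewrite in_setT.
  by rewrite sum1E -EFinM mulVf // pnatr_eq0 -lt0n.
- rewrite /second_moment (int_emp _ (f := EFin \o (fun x : R => (x ^+ 2)%R))) /=.
  + by rewrite sumEFin -EFinM ltry.
  + exact: mf_sq.
  + by move=> x /=; rewrite lee_fin sqr_ge0.
Qed.
End M4.
Section M5.
Variable R : realType.
Local Open Scope ereal_scope.
Lemma esqrt_le (x : \bar R) (y : R) : x <= y%:E -> esqrt x <= (Num.sqrt y)%:E.
Proof.
case: x => [r||] //=; rewrite ?lee_fin ?sqrtr_ge0 //.
by move=> ?; rewrite ler_wsqrtr.
Qed.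

Lemma W2_emp d (th th' : 'cV[R]_d) : (0 < d)%N ->
  W2 (empirical th) (empirical th') <=
  (Num.sqrt (d%:R^-1 * \sum_(k < d) (th k 0 - th' k 0) ^+ 2)%R)%:E.
Proof.
move=> d0; rewrite /W2; apply: esqrt_le.
apply: le_trans (ereal_inf_lbound _) _.
  by exists (coup th th'); [exact: coup_ok|reflexivity].
rewrite (int_coup _ _ (f := EFin \o (fun z : R * R => ((z.1 - z.2) ^+ 2)%R))) /=.
- by rewrite sumEFin -EFinM.
- exact: mf_sq2.
- by move=> x /=; rewrite lee_fin sqr_ge0.
Qed.
End M5.
Section E.
Variable R : realType.
Implicit Types (m : nat).
Definition sq m (v : 'cV[R]_m) := \sum_(i < m) v i 0 ^+ 2.
Definition dot m (a b : 'cV[R]_m) := \sum_(i < m) a i 0 * b i 0.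

Lemma sq_ge0 m (v : 'cV[R]_m) : 0 <= sq v.
Proof. by apply: sumr_ge0 => i _; rewrite sqr_ge0. Qed.
Lemma enormE m (v : 'cV[R]_m) : enorm v = Num.sqrt (sq v).
Proof. by []. Qed.
Lemma enorm_ge0 m (v : 'cV[R]_m) : 0 <= enorm v.
Proof. exact: sqrtr_ge0. Qed.
Lemma enorm_sq m (v : 'cV[R]_m) : enorm v ^+ 2 = sq v.
Proof. by rewrite enormE sqr_sqrtr // sq_ge0. Qed.

Lemma expand_sq m (a b : 'cV[R]_m) (x y : R) :
  \sum_(i < m) (x * b i 0 - y * a i 0) ^+ 2 = x ^+ 2 * sq b - 2 * x * y * dot a b + y ^+ 2 * sq a.
Proof.
transitivity (\sum_(i < m) (x ^+ 2 * b i 0 ^+ 2 - (2 * x * y) * (a i 0 * b i 0) + y ^+ 2 * a i 0 ^+ 2)).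
  by apply: eq_bigr => i _; ring.
by rewrite big_split /= sumrB /sq /dot !mulr_sumr.
Qed.

Lemma CS m (a b : 'cV[R]_m) : dot a b ^+ 2 <= sq a * sq b.
Proof.
have [A0|Apos] := eqVneq (sq a) 0.
  have a0 : forall i, a i 0 = 0.
    move=> i; apply/eqP; rewrite -sqrf_eq0; apply/eqP.
    by move/psumr_eq0P: A0 => ->// j _; rewrite sqr_ge0.
  by rewrite A0 mul0r /dot big1 ?expr0n // => i _; rewrite a0 mul0r.
have A0 : 0 < sq a by rewrite lt_def Apos sq_ge0.
have := expand_sq a b (sq a) (dot a b).
have : 0 <= \sum_(i < m) (sq a * b i 0 - dot a b * a i 0) ^+ 2.
  by apply: sumr_ge0 => i _; rewrite sqr_ge0.
move=> H E; rewrite E in H.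
have H2 : 0 <= sq a * (sq a * sq b - dot a b ^+ 2).
  by move: H; congr (_ <= _); ring.
rewrite -subr_ge0; move: H2; rewrite pmulr_rge0 //.
Qed.

Lemma dot_le m (a b : 'cV[R]_m) : dot a b <= enorm a * enorm b.
Proof.
have h : `|dot a b| <= enorm a * enorm b.
  rewrite -(ger0_norm (mulr_ge0 (enorm_ge0 a) (enorm_ge0 b))).
  rewrite -ler_sqr ?nnegrE ?normr_ge0 //.
  rewrite !real_normK ?num_real // exprMn !enorm_sq; exact: CS.
exact: le_trans (ler_norm _) h.
Qed.

Lemma sqD m (a b : 'cV[R]_m) : sq (a + b) = sq a + 2 * dot a b + sq b.
Proof.
rewrite /sq /dot mulr_sumr -!big_split /=; apply: eq_bigr => i _; rewrite !mxE; ring.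
Qed.

Lemma enormD m (a b : 'cV[R]_m) : enorm (a + b) <= enorm a + enorm b.
Proof.
rewrite -ler_sqr ?nnegrE ?addr_ge0 ?enorm_ge0 // enorm_sq sqD.
have := dot_le a b; rewrite -!enorm_sq => h.
rewrite sqrrD; lra.
Qed.

Lemma sqZ m c (v : 'cV[R]_m) : sq (c *: v) = c ^+ 2 * sq v.
Proof. by rewrite /sq mulr_sumr; apply: eq_bigr => i _; rewrite !mxE exprMn. Qed.

Lemma enormZ m c (v : 'cV[R]_m) : enorm (c *: v) = `|c| * enorm v.
Proof. by rewrite !enormE sqZ sqrtrM ?sqr_ge0 // sqrtr_sqr. Qed.

Lemma enormN m (v : 'cV[R]_m) : enorm (- v) = enorm v.
Proof. by rewrite -scaleN1r enormZ normrN normr1 mul1r. Qed.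

Lemma enormB m (a b : 'cV[R]_m) : enorm (a - b) <= enorm a + enorm b.
Proof. by rewrite -(enormN b) enormD. Qed.

Lemma enorm0 m : enorm (0 : 'cV[R]_m) = 0.
Proof. by rewrite -(scale0r (0 : 'cV[R]_m)) enormZ normr0 mul0r. Qed.

Lemma coord_le m (v : 'cV[R]_m) i : `|v i 0| <= enorm v.
Proof.
rewrite -ler_sqr ?nnegrE ?enorm_ge0 // real_normK ?num_real // enorm_sq /sq (bigD1 i) //=.
by rewrite lerDl sumr_ge0 // => j _; rewrite sqr_ge0.
Qed.
End E.
Section E1b.
Variable R : realType.
Lemma enorm_le_sq m (v : 'cV[R]_m) (y : R) : 0 <= y -> sq v <= y ^+ 2 -> enorm v <= y.
Proof.
move=> y0 h; rewrite enormE -(ger0_norm y0) -sqrtr_sqr; exact: ler_wsqrtr.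
Qed.
End E1b.
Lemma eq_le_ok (R : realType) (x y : R) : x = y -> x <= y.
Proof. by move=> ->. Qed.
Section E2.
Variable R : realType.
Lemma sq0P m (v : 'cV[R]_m) : sq v = 0 -> v = 0.
Proof.
move=> h; apply/matrixP => i j; rewrite (ord1 j) mxE; apply/eqP; rewrite -sqrf_eq0; apply/eqP.
by move/psumr_eq0P: h => ->// k _; rewrite sqr_ge0.
Qed.
Lemma enorm0P m (v : 'cV[R]_m) : enorm v = 0 -> v = 0.
Proof. by move=> h; apply: sq0P; rewrite -enorm_sq h expr0n. Qed.

Lemma mulmx_crude n d (X : 'M[R]_(n, d)) (v : 'cV[R]_d) :
  enorm (X *m v) <= Num.sqrt (\sum_(i < n) sq (\col_j X i j)) * enorm v.
Proof.
rewrite -ler_sqr ?nnegrE ?mulr_ge0 ?sqrtr_ge0 ?enorm_ge0 // exprMn !enorm_sq.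
rewrite sqr_sqrtr; last by apply: sumr_ge0 => i _; exact: sq_ge0.
rewrite {1}/sq mulr_suml; apply: ler_sum => i _.
have -> : (X *m v) i 0 = dot (\col_j X i j) v.
  by rewrite mxE /dot; apply: eq_bigr => j _; rewrite mxE.
exact: CS.
Qed.

Lemma opnorm_le n d (X : 'M[R]_(n, d)) (v : 'cV[R]_d) :
  enorm (X *m v) <= opnorm X * enorm v.
Proof.
set M := Num.sqrt (\sum_(i < n) sq (\col_j X i j)).
have hub : has_ubound [set enorm (X *m v) | v in [set v : 'cV[R]_d | enorm v <= 1]].
  exists M => _ [w /= hw <-].
  apply: le_trans (mulmx_crude X w) _.
  by apply: ler_piMr; rewrite ?sqrtr_ge0.
have [v0|vn0] := eqVneq (enorm v) 0.
  by rewrite v0 (enorm0P v0) mulmx0 enorm0 mulr0.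
have vpos : 0 < enorm v by rewrite lt_def vn0 enorm_ge0.
have key : enorm (X *m ((enorm v)^-1 *: v)) <= opnorm X.
  apply: (ub_le_sup hub); exists ((enorm v)^-1 *: v) => //=.
  by rewrite enormZ ger0_norm ?invr_ge0 ?enorm_ge0 // mulVf.
move: key; rewrite -scalemxAr enormZ ger0_norm ?invr_ge0 ?enorm_ge0 //.
by rewrite ler_pdivrMl // mulrC.
Qed.
End E2.
Section E3.
Variable R : realType.
Lemma dot_tr n d (X : 'M[R]_(n, d)) (w : 'cV[R]_n) (v : 'cV[R]_d) :
  dot (X^T *m w) v = dot w (X *m v).
Proof.
rewrite /dot.
transitivity (\sum_(i < d) \sum_(j < n) X j i * w j 0 * v i 0).
  by apply: eq_bigr => i _; rewrite mxE mulr_suml; apply: eq_bigr => j _; rewrite mxE.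
rewrite exchange_big /=; apply: eq_bigr => j _; rewrite mxE mulr_sumr.
by apply: eq_bigr => i _; rewrite mulrA [w j 0 * _]mulrC.
Qed.
Lemma dot_self m (v : 'cV[R]_m) : dot v v = sq v.
Proof. by apply: eq_bigr => i _; rewrite expr2. Qed.

Lemma opnorm_ge0 n d (X : 'M[R]_(n, d)) : 0 <= opnorm X.
Proof.
have := opnorm_le X (const_mx 1).
have [->|ne] := eqVneq (enorm (const_mx 1 : 'cV[R]_d)) 0.
  rewrite mulr0 => h.
  (* degenerate d = 0 *)
  have hub : has_ubound [set enorm (X *m v) | v in [set v : 'cV[R]_d | enorm v <= 1]].
    exists (Num.sqrt (\sum_(i < n) sq (\col_j X i j))) => _ [w /= hw <-].
    apply: le_trans (mulmx_crude X w) _.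
    by apply: ler_piMr; rewrite ?sqrtr_ge0.
  apply: (ub_le_sup hub); exists 0 => /=; first by rewrite enorm0.
  by rewrite mulmx0 enorm0.
move=> h; have pos : 0 < enorm (const_mx 1 : 'cV[R]_d) by rewrite lt_def ne enorm_ge0.
by rewrite -(pmulr_lge0 _ pos); apply: le_trans h; exact: enorm_ge0.
Qed.

Lemma tr_le n d (X : 'M[R]_(n, d)) (w : 'cV[R]_n) :
  enorm (X^T *m w) <= opnorm X * enorm w.
Proof.
set z := X^T *m w.
have h : enorm z ^+ 2 <= enorm w * (opnorm X * enorm z).
  rewrite enorm_sq -dot_self {1}/z dot_tr.
  apply: le_trans (dot_le _ _) _; apply: ler_wpM2l; first exact: enorm_ge0.
  exact: opnorm_le.
have [z0|zn0] := eqVneq (enorm z) 0.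
  by rewrite z0 mulr_ge0 ?opnorm_ge0 ?enorm_ge0.
have zpos : 0 < enorm z by rewrite lt_def zn0 enorm_ge0.
move: h; have -> : enorm w * (opnorm X * enorm z) = enorm z * (opnorm X * enorm w) by ring.
by rewrite expr2 ler_pM2l.
Qed.

Lemma evec_norm m (j : 'I_m) : enorm (evec j : 'cV[R]_m) = 1.
Proof.
rewrite enormE /sq (bigD1 j) //= big1 ?addr0 ?mxE ?eqxx /= ?expr1n ?sqrtr1 //.
by move=> i ij; rewrite mxE (negbTE ij) /= expr0n.
Qed.
End E3.
Section E4.
Variable R : realType.
Lemma line_derive m (f : 'cV[R]_m -> R) (v z : 'cV[R]_m) (t : R) :
  derivable f (z + t *: v) v ->
  is_derive t 1 (fun s : R => f (z + s *: v)) ('D_v f (z + t *: v)).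
Proof.
move=> df.
have E : (fun h : R => h^-1 *: (((fun s : R => f (z + s *: v)) \o shift t) (h *: 1) - f (z + t *: v)))
   = (fun h : R => h^-1 *: ((f \o shift (z + t *: v)) (h *: v) - f (z + t *: v))).
  apply/funext => h /=; congr (_ *: (f _ - _)).
  have -> : (h%:A : R) = h by rewrite -[RHS]mulr1.
  by rewrite scalerDl addrCA.
split.
  by rewrite /derivable E.
by rewrite /derive E.
Qed.

Lemma line_lip m (f : 'cV[R]_m -> R) (v : 'cV[R]_m) M :
  (forall x, derivable f x v) -> (forall x, `|'D_v f x| <= M) ->
  forall z h, `|f (z + h *: v) - f z| <= M * `|h|.
Proof.
move=> df dM.
have key : forall z h, 0 <= h -> `|f (z + h *: v) - f z| <= M * h.
  move=> z h h0.
  pose g := fun s : R => f (z + s *: v).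
  have gd : forall t : R, is_derive t (1:R) g ('D_v f (z + t *: v)).
    by move=> t; apply: line_derive.
  have -> : f z = g 0 by rewrite /g scale0r addr0.
  change (f (z + h *: v)) with (g h).
  have H1 : forall x, x \in `]0, h[%R -> is_derive x 1 g ('D_v f (z + x *: v)).
    by move=> x xin; exact: gd.
  have H2 : {within `[0, h], continuous g}.
    apply: derivable_within_continuous => x xin.
    exact: (@ex_derive _ _ _ _ _ _ _ (gd x)).
  have [c _ ->] := MVT_segment h0 H1 H2.
  by rewrite subr0 normrM (ger0_norm h0) ler_wpM2r.
move=> z h.
have [h0|h0] := leP 0 h.
  by rewrite (ger0_norm h0); apply: key.
have := key (z + h *: v) (- h); rewrite oppr_ge0 ltW // => /(_ isT).
by rewrite scaleNr addrK distrC (ltr0_norm h0).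
Qed.
End E4.
Section E5.
Variable R : realType.
Lemma coord_lip m (f : 'cV[R]_m -> R) M :
  (forall x i, derivable f x (evec i)) -> (forall x i, `|pder i f x| <= M) ->
  forall x y, `|f y - f x| <= M * \sum_(i < m) `|y i 0 - x i 0|.
Proof.
move=> df dM x y.
pose w k := \col_(i < m) (if (i < k)%N then y i 0 else x i 0).
pose S k := \sum_(i < m) (if (i < k)%N then `|y i 0 - x i 0| else 0).
suff : forall k, (k <= m)%N -> `|f (w k) - f x| <= M * S k.
  move=> /(_ m (leqnn m)).
  have -> : w m = y by apply/matrixP => i j; rewrite (ord1 j) mxE ltn_ord.
  have -> : S m = \sum_(i < m) `|y i 0 - x i 0| by apply: eq_bigr => i _; rewrite ltn_ord.
  by [].
elim=> [|k IH] km.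
  have -> : w 0%N = x by apply/matrixP => i j; rewrite (ord1 j) mxE.
  rewrite subrr normr0 /S big1 ?mulr0 // => i _; by [].
pose i0 := Ordinal km.
have Ew : w k.+1 = w k + (y i0 0 - x i0 0) *: evec i0.
  apply/matrixP => i j; rewrite (ord1 j) !mxE /=.
  case: (ltngtP i k) => [ik|ki|ik].
  - by rewrite ltnS ltnW // eqE /= (ltn_eqF ik) mulr0 addr0.
  - by rewrite ltnS leqNgt ki /= eqE /= (gtn_eqF ki) mulr0 addr0.
  - have ii0 : i = i0 by apply: val_inj.
    by rewrite ii0 eqxx /= ltnS leqnn mulr1 addrCA subrr addr0.
have ES : S k.+1 = S k + `|y i0 0 - x i0 0|.
  rewrite /S.
  transitivity (\sum_(i < m) ((if (i < k)%N then `|y i 0 - x i 0| else 0) + (if i == i0 then `|y i 0 - x i 0| else 0))).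
    apply: eq_bigr => i _; rewrite ltnS leq_eqVlt.
    have -> : (i == i0) = (i == k :> nat) by [].
    by case: (ltngtP i k) => [ik|ki|ik] /=; rewrite ?addr0 ?add0r.
  by rewrite big_split /=; congr (_ + _); rewrite -big_mkcond big_pred1_eq.
have IH' := IH (ltnW km).
rewrite Ew ES mulrDr.
have := line_lip (df^~ i0) (dM^~ i0) (w k) (y i0 0 - x i0 0).
move=> h1.
have -> : f (w k + (y i0 0 - x i0 0) *: evec i0) - f x =
  (f (w k + (y i0 0 - x i0 0) *: evec i0) - f (w k)) + (f (w k) - f x) by rewrite addrA subrK.
apply: le_trans (ler_normD _ _) _; rewrite addrC; exact: lerD.
Qed.
End E5.
Section E6.
Variable R : realType.
Lemma pder_le m (f : 'cV[R]_m -> R) M x i : enorm (grad f x) <= M -> `|pder i f x| <= M.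
Proof. by move=> h; apply: le_trans h; have := coord_le (grad f x) i; rewrite mxE. Qed.

Lemma A3_CA K CA (s : R -> 'cV[R]_K -> R) : A3 CA s -> 0 <= CA.
Proof. by case=> _ _ h _; apply: le_trans (h 0); exact: enorm_ge0. Qed.

Lemma s_lip K CA (s : R -> 'cV[R]_K -> R) : A3 CA s ->
  forall a a' al al', `|s a' al' - s a al| <= CA * (`|a' - a| + K%:R * enorm (al' - al)).
Proof.
move=> hA; have CA0 := A3_CA hA; case: hA => [[dd _ _ _] _ hg _] a a' al al'.
have E : forall b (bl : 'cV[R]_K), s b bl = sjoint s (col_mx (const_mx b) bl).
  by move=> b bl; rewrite /sjoint col_mxKu col_mxKd mxE.
rewrite !E.
apply: le_trans (coord_lip dd (fun x i => pder_le i (hg x)) _ _) _.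
apply: ler_wpM2l => //.
rewrite big_split_ord /= big_ord1.
rewrite col_mxEu col_mxEu !mxE.
apply: lerD => //.
apply: le_trans (_ : \sum_(i < K) enorm (al' - al) <= _); last first.
  by rewrite sumr_const card_ord mulr_natl.
apply: ler_sum => i _; rewrite !col_mxEd.
by have := coord_le (al' - al) i; rewrite !mxE.
Qed.
End E6.
Section E7.
Variable R : realType.
Lemma aux_ineq (c A u k : R) : 0 <= c -> 0 <= A -> 0 <= u -> 0 <= k ->
  2 * c ^+ 2 * (A ^+ 2 + k ^+ 2 * u ^+ 2) <= (2 * c * (1 + k) * (A + u)) ^+ 2.
Proof.
move=> c0 A0 u0 k0.
have h1 : A ^+ 2 + k ^+ 2 * u ^+ 2 <= (1 + k) ^+ 2 * (A + u) ^+ 2.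
  have e1 : 0 <= (k ^+ 2 + 2 * k) * A ^+ 2 by rewrite mulr_ge0 ?addr_ge0 ?mulr_ge0 ?sqr_ge0.
  have e2 : 0 <= (1 + 2 * k) * u ^+ 2 by rewrite mulr_ge0 ?addr_ge0 ?mulr_ge0 ?sqr_ge0.
  have e3 : 0 <= (1 + k) ^+ 2 * (2 * A * u) by rewrite mulr_ge0 ?sqr_ge0 ?mulr_ge0.
  have -> : (1 + k) ^+ 2 * (A + u) ^+ 2 = A ^+ 2 + k ^+ 2 * u ^+ 2 + ((k ^+ 2 + 2 * k) * A ^+ 2 + (1 + 2 * k) * u ^+ 2 + (1 + k) ^+ 2 * (2 * A * u)) by ring.
  by rewrite lerDl !addr_ge0.
have -> : (2 * c * (1 + k) * (A + u)) ^+ 2 = 2 * c ^+ 2 * ((1 + k) ^+ 2 * (A + u) ^+ 2) + 2 * c ^+ 2 * ((1 + k) ^+ 2 * (A + u) ^+ 2) by ring.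
apply: le_trans (_ : 2 * c ^+ 2 * ((1 + k) ^+ 2 * (A + u) ^+ 2) <= _).
  by apply: ler_wpM2l => //; rewrite mulr_ge0 ?sqr_ge0.
have p : 0 <= (1 + k) ^+ 2 * (A + u) ^+ 2 by rewrite mulr_ge0 ?sqr_ge0.
by rewrite lerDr mulr_ge0 // mulr_ge0 // sqr_ge0.
Qed.

Lemma svec_lip K CA (s : R -> 'cV[R]_K -> R) d (th th' : 'cV[R]_d) al al' : A3 CA s ->
  enorm (svec s th' al' - svec s th al) <=
  2 * CA * (1 + K%:R) * (enorm (th' - th) + Num.sqrt d%:R * enorm (al' - al)).
Proof.
move=> hA; have CA0 := A3_CA hA.
set e := enorm (al' - al).
have e0 : 0 <= e by exact: enorm_ge0.
apply: enorm_le_sq.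
  by repeat (apply: mulr_ge0 || apply: addr_ge0); rewrite ?ler0n ?enorm_ge0 ?sqrtr_ge0.
apply: le_trans (aux_ineq CA0 (enorm_ge0 (th' - th)) (mulr_ge0 (sqrtr_ge0 d%:R) e0) (ler0n _ K)).
rewrite exprMn sqr_sqrtr ?ler0n //; last by apply: sumr_ge0 => i _; exact: sqr_ge0.
apply: le_trans (_ : _ <= \sum_(k < d) 2 * CA ^+ 2 * ((th' k 0 - th k 0) ^+ 2 + K%:R ^+ 2 * e ^+ 2)) _; last first.
  apply: eq_le_ok; rewrite -mulr_sumr big_split /= sumr_const card_ord; congr (_ * (_ + _)).
    by apply: eq_bigr => i _; rewrite !mxE.
  by rewrite (sqr_sqrtr (ler0n R d)) -mulr_natr; ring.
rewrite /sq. apply: (@ler_sum R). move=> k _; rewrite !mxE.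
have h := s_lip hA (th k 0) (th' k 0) al al'.
apply: le_trans (_ : (CA * (`|th' k 0 - th k 0| + K%:R * e)) ^+ 2 <= _).
  by rewrite -real_normK ?num_real // ler_sqr ?nnegrE // mulr_ge0 // addr_ge0 // mulr_ge0.
have : (`|th' k 0 - th k 0| + K%:R * e) ^+ 2 <= 2 * ((th' k 0 - th k 0) ^+ 2 + (K%:R ^+ 2 * e ^+ 2)).
  rewrite -[(th' k 0 - th k 0) ^+ 2]real_normK ?num_real //.
  set p := `|_|; set q := K%:R * e.
  have -> : K%:R ^+ 2 * e ^+ 2 = q ^+ 2 by rewrite /q exprMn.
  have : 0 <= (p - q) ^+ 2 by exact: sqr_ge0.
  have -> : 2 * (p ^+ 2 + q ^+ 2) = (p + q) ^+ 2 + (p - q) ^+ 2 by ring.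
  by rewrite lerDl.
move=> h2; rewrite exprMn.
have := ler_wpM2l (sqr_ge0 CA) h2.
by move=> h3; apply: le_trans h3 _; apply: eq_le_ok; ring.
Qed.
End E7.
Section E8.
Variable R : realType.
Lemma sqrt_sq_div d (v : 'cV[R]_d) : (0 < d)%N ->
  Num.sqrt (d%:R^-1 * \sum_(k < d) v k 0 ^+ 2) = enorm v / Num.sqrt d%:R.
Proof.
move=> d0; rewrite sqrtrM ?invr_ge0 ?ler0n // sqrtrV ?ler0n // mulrC.
by [].
Qed.

Lemma G_lip K CA (G : 'cV[R]_K -> {measure set R -> \bar R} -> 'cV[R]_K) d
  (th th' : 'cV[R]_d) al al' : A4 CA G -> 0 <= CA -> (0 < d)%N ->
  Num.sqrt d%:R * enorm (G al (empirical th) - G al' (empirical th')) <=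
  CA * (enorm (th - th') + Num.sqrt d%:R * enorm (al - al')).
Proof.
case=> _ hL _ CA0 d0.
have h := hL al al' (empirical th) (empirical th') (inP2_emp th d0) (inP2_emp th' d0).
have hW := W2_emp th th' d0.
have : ((enorm (G al (empirical th) - G al' (empirical th')))%:E <=
        (CA * (enorm (al - al') + enorm (th - th') / Num.sqrt d%:R))%:E)%E.
  apply: le_trans h _.
  rewrite EFinM EFinD; apply: lee_wpmul2l; first by rewrite lee_fin.
  apply: leeD2l; apply: le_trans hW _.
  have -> : (\sum_(k < d) (th k 0 - th' k 0) ^+ 2) = \sum_(k < d) (th - th') k 0 ^+ 2.
    by apply: eq_bigr => k _; rewrite !mxE.
  by rewrite sqrt_sq_div.
rewrite lee_fin => h2.
have sd : 0 < Num.sqrt (d%:R : R) by rewrite sqrtr_gt0 ltr0n.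
apply: le_trans (ler_wpM2l (ltW sd) h2) _.
apply: eq_le_ok; field; rewrite gt_eqF //.
Qed.
End E8.
Section D1.
Variable R : realType.
Lemma cvg_sum_seq (T : topologicalType) (I : Type) (r : seq I) (F : I -> T -> R) (x : T) :
  (forall i, F i @ x --> F i x) ->
  (fun v => \sum_(i <- r) F i v) @ x --> \sum_(i <- r) F i x.
Proof.
move=> hF; elim: r => [|i r IH].
  under eq_fun do rewrite big_nil; rewrite big_nil; exact: cvg_cst.
under eq_fun do rewrite big_cons; rewrite big_cons.
by apply: cvgD => //; exact: hF.
Qed.

Lemma enorm_cont m : continuous (@enorm R m).
Proof.
move=> x; rewrite /enorm.
apply: (continuous_comp (f := fun v : 'cV[R]_m => \sum_(i < m) v i 0 ^+ 2)).
  apply: cvg_sum_seq => i.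
  have hc := @coord_continuous R m 1 i 0 x.
  under eq_fun do rewrite expr2; rewrite expr2.
  exact: (cvgM hc hc).
exact: sqrt_continuous.
Qed.
End D1.
Section D2.
Variable R : realType.
Lemma deriv_le m (f : R -> 'cV[R]_m) (L : R) :
  (forall h, enorm (f h - f 0) <= L * `|h|) -> enorm (derive1 f 0) <= L.
Proof.
move=> hL.
have L0 : 0 <= L by have := hL 1; rewrite normr1 mulr1; apply: le_trans; exact: enorm_ge0.
rewrite /derive1.
set q := fun h : R => h^-1 *: (f (h + 0) - f 0).
have [cv|ncv] := pselect (cvg (q @ 0^')).
  apply: (closed_cvg (fun v => enorm v <= L)) cv.
    apply: (@preimage_closed _ _ (@enorm R m) [set x | x <= L]).
      by move=> x _; exact: enorm_cont.
    exact: closed_le.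
  near=> h.
  rewrite /q addr0 enormZ normfV ler_pdivrMl ?normr_gt0 //.
  by rewrite mulrC.
  by near: h; exact: nbhs_dnbhs_neq.
have -> : lim (q @ 0^') = 0.
  rewrite /lim /lim_in getPN; last by move=> l hl; apply: ncv; apply/cvg_ex; exists l.
  by apply/matrixP => i j; rewrite !mxE.
by rewrite enorm0.
Unshelve. all: by end_near.
Qed.
End D2.
Section F1.
Variable R : realType.
Lemma dynS n d K (X : 'M[R]_(n, d)) y beta gamma s G b th0 al0 (u : 'cV[R]_d) s0 eps t :
  @dyn R n d K X y beta gamma s G b th0 al0 u s0 eps t.+1 =
  let p := dyn X y beta gamma s G b th0 al0 u s0 eps t in
  (p.1 - gamma *: (beta *: (X^T *m (X *m p.1 - y)) - svec s p.1 p.2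
                    - (if t == s0 then eps *: u else 0))
        + Num.sqrt 2 *: (b t.+1 - b t),
     p.2 + gamma *: G p.2 (empirical p.1)).
Proof. by rewrite /=; case: (dyn _ _ _ _ _ _ _ _ _ _ _ _ t). Qed.

Lemma alg_theta d (a1 a2 Z1 Z2 S1 S2 E1 E2 N : 'cV[R]_d) (g bt : R) :
  (a1 - g *: (bt *: Z1 - S1 - E1) + N) - (a2 - g *: (bt *: Z2 - S2 - E2) + N)
  = (a1 - a2) - g *: (bt *: (Z1 - Z2)) + g *: (S1 - S2) + g *: (E1 - E2).
Proof. by apply/matrixP => i j; rewrite !mxE; ring. Qed.

Lemma alg_Z n d (X : 'M[R]_(n, d)) y (a1 a2 : 'cV[R]_d) :
  X^T *m (X *m a1 - y) - X^T *m (X *m a2 - y) = X^T *m (X *m (a1 - a2)).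
Proof. by rewrite -mulmxBr; congr (_ *m _); rewrite mulmxBr opprB addrA subrK. Qed.
End F1.
Section F2.
Variable R : realType.
Lemma step_bound n d K (X : 'M[R]_(n, d)) y beta gamma s G b th0 al0 (u : 'cV[R]_d) s0
   (e1 e2 CA C0 : R) t :
  0 < gamma -> (0 < d)%N -> A3 CA s -> A4 CA G -> opnorm X <= C0 ->
  let P := @dyn R n d K X y beta gamma s G b th0 al0 u s0 e1 t in
  let Q := @dyn R n d K X y beta gamma s G b th0 al0 u s0 e2 t in
  let P' := @dyn R n d K X y beta gamma s G b th0 al0 u s0 e1 t.+1 in
  let Q' := @dyn R n d K X y beta gamma s G b th0 al0 u s0 e2 t.+1 in
  enorm (P'.1 - Q'.1) + Num.sqrt d%:R * enorm (P'.2 - Q'.2) <=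
  (1 + gamma * (`|beta| * C0 ^+ 2 + 2 * CA * (1 + K%:R) + CA)) *
    (enorm (P.1 - Q.1) + Num.sqrt d%:R * enorm (P.2 - Q.2))
  + (if t == s0 then gamma * `|e1 - e2| * enorm u else 0).
Proof.
move=> g0 d0 hA3 hA4 hX; cbv zeta.
have CA0 := A3_CA hA3.
have C00 : 0 <= C0 := le_trans (opnorm_ge0 X) hX.
rewrite !dynS /=.
set P := dyn X y beta gamma s G b th0 al0 u s0 e1 t.
set Q := dyn X y beta gamma s G b th0 al0 u s0 e2 t.
set a1 := P.1; set l1 := P.2; set a2 := Q.1; set l2 := Q.2.
set A := enorm (a1 - a2); set B := Num.sqrt d%:R * enorm (l1 - l2).
have A0 : 0 <= A by exact: enorm_ge0.
have B0 : 0 <= B by rewrite mulr_ge0 ?sqrtr_ge0 ?enorm_ge0.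
set Et := (if t == s0 then gamma * `|e1 - e2| * enorm u else 0).
rewrite alg_theta alg_Z.
have hXX : enorm (X^T *m (X *m (a1 - a2))) <= C0 ^+ 2 * A.
  apply: le_trans (tr_le _ _) _; apply: le_trans (ler_wpM2r (enorm_ge0 _) hX) _.
  rewrite expr2 -mulrA; apply: ler_wpM2l => //.
  apply: le_trans (opnorm_le _ _) _; rewrite -/A; exact: (ler_wpM2r A0 hX).
have hS := svec_lip a2 a1 l2 l1 hA3.
have hE : enorm (gamma *: ((if t == s0 then e1 *: u else 0) - (if t == s0 then e2 *: u else 0))) = Et.
  rewrite /Et; case: (t == s0).
    by rewrite -scalerBl enormZ enormZ (gtr0_norm g0) mulrA.
  by rewrite subr0 scaler0 enorm0.
have h1 : enorm (a1 - a2 - gamma *: (beta *: (X^T *m (X *m (a1 - a2)))) + gamma *: (svec s a1 l1 - svec s a2 l2) + gamma *: ((if t == s0 then e1 *: u else 0) - (if t == s0 then e2 *: u else 0)))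
    <= A + gamma * `|beta| * (C0 ^+ 2 * A) + gamma * (2 * CA * (1 + K%:R) * (A + B)) + Et.
  rewrite -hE; apply: le_trans (enormD _ _) _; rewrite lerD2r.
  apply: le_trans (enormD _ _) _; apply: lerD; last first.
    by rewrite enormZ (gtr0_norm g0); apply: ler_wpM2l; [exact: ltW|exact: hS].
  apply: le_trans (enormB _ _) _; rewrite lerD2l enormZ (gtr0_norm g0) enormZ mulrA.
  by apply: ler_wpM2l => //; rewrite mulr_ge0 ?normr_ge0 // ltW.
have h2 : Num.sqrt d%:R * enorm (l1 + gamma *: G l1 (empirical a1) - (l2 + gamma *: G l2 (empirical a2)))
    <= B + gamma * (CA * (A + B)).
  have -> : l1 + gamma *: G l1 (empirical a1) - (l2 + gamma *: G l2 (empirical a2)) =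
            (l1 - l2) + gamma *: (G l1 (empirical a1) - G l2 (empirical a2)).
    by apply/matrixP => i j; rewrite !mxE; ring.
  apply: le_trans (ler_wpM2l (sqrtr_ge0 _) (enormD _ _)) _.
  rewrite mulrDr lerD2l enormZ (gtr0_norm g0) mulrCA; apply: ler_wpM2l; first exact: ltW.
  exact: (G_lip a1 a2 l1 l2 hA4 CA0 d0).
apply: le_trans (lerD h1 h2) _.
have -> : (1 + gamma * (`|beta| * C0 ^+ 2 + 2 * CA * (1 + K%:R) + CA)) * (A + B) + Et =
   (A + gamma * `|beta| * (C0 ^+ 2 * A) + gamma * (2 * CA * (1 + K%:R) * (A + B)) + Et) +
   (B + gamma * (CA * (A + B))) + gamma * `|beta| * C0 ^+ 2 * B by ring.
rewrite lerDl; rewrite mulr_ge0 // mulr_ge0 // ?sqr_ge0 // mulr_ge0 // ltW //.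
Qed.
End F2.
Section F3.
Variable R : realType.
Definition Dd n d K (X : 'M[R]_(n, d)) y beta gamma (s : R -> 'cV[R]_K -> R) G b th0 al0 (u : 'cV[R]_d) s0 (e1 e2 : R) t :=
  let P := @dyn R n d K X y beta gamma s G b th0 al0 u s0 e1 t in
  let Q := @dyn R n d K X y beta gamma s G b th0 al0 u s0 e2 t in
  enorm (P.1 - Q.1) + Num.sqrt d%:R * enorm (P.2 - Q.2).

Lemma iter_bound n d K (X : 'M[R]_(n, d)) y beta gamma (s : R -> 'cV[R]_K -> R) G b th0 al0 (u : 'cV[R]_d) s0
   (e1 e2 CA C0 : R) :
  0 < gamma -> (0 < d)%N -> A3 CA s -> A4 CA G -> opnorm X <= C0 ->
  forall t, Dd X y beta gamma s G b th0 al0 u s0 e1 e2 t <=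
    (if (s0 < t)%N then gamma * `|e1 - e2| * enorm u *
       (1 + gamma * (`|beta| * C0 ^+ 2 + 2 * CA * (1 + K%:R) + CA)) ^+ t else 0).
Proof.
move=> g0 d0 hA3 hA4 hX.
have CA0 := A3_CA hA3.
set c := `|beta| * C0 ^+ 2 + 2 * CA * (1 + K%:R) + CA.
have c0 : 0 <= c.
  rewrite /c; apply: addr_ge0 => //; apply: addr_ge0; first by apply: mulr_ge0; [exact: normr_ge0|exact: sqr_ge0].
  by apply: mulr_ge0; [apply: mulr_ge0|apply: addr_ge0].

have q1 : 1 <= 1 + gamma * c by rewrite lerDl mulr_ge0 // ltW.
set M0 := gamma * `|e1 - e2| * enorm u.
have M00 : 0 <= M0 by rewrite /M0 !mulr_ge0 ?normr_ge0 ?enorm_ge0 // ltW.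
elim=> [|t IH].
  by rewrite /Dd /= !subrr !enorm0 mulr0 addr0.
have hs := @step_bound R n d K X y beta gamma s G b th0 al0 u s0 e1 e2 CA C0 t g0 d0 hA3 hA4 hX.
rewrite -/c -/M0 in hs.
apply: le_trans hs _.
rewrite -/(Dd X y beta gamma s G b th0 al0 u s0 e1 e2 t).
have q0 : 0 <= 1 + gamma * c by exact: le_trans q1.
have [lt|gt|eq] := ltngtP s0 t.
- rewrite ltnS ltnW // addr0 exprS mulrCA.
  by apply: ler_wpM2l => //; rewrite lt in IH.
- have f1 : (s0 < t)%N = false by rewrite ltnNge ltnW.
  have f2 : (s0 < t.+1)%N = false by rewrite ltnS leqNgt gt.
  rewrite f1 in IH; rewrite f2 addr0.
  by apply: le_trans (ler_wpM2l q0 IH) _; rewrite mulr0.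
- rewrite -eq ltnn in IH; rewrite -eq ltnSn.
  apply: le_trans (_ : (1 + gamma * c) * 0 + M0 <= _).
    by rewrite lerD2r; apply: ler_wpM2l.
  by rewrite mulr0 add0r ler_peMr // exprn_ege1.
Qed.
End F3.
Section F4.
Variable R : realType.
Lemma main_u n d K (X : 'M[R]_(n, d)) y beta gamma (s : R -> 'cV[R]_K -> R) G b th0 al0
   (u : 'cV[R]_d) s0 (CA C0 T Mx : R) t :
  0 < gamma -> (0 < d)%N -> A3 CA s -> A4 CA G -> opnorm X <= C0 ->
  enorm u <= Mx -> t%:R * gamma <= T ->
  enorm (derive1 (fun eps => (dyn X y beta gamma s G b th0 al0 u s0 eps t).1) 0)
  + Num.sqrt d%:R * enorm (derive1 (fun eps => (dyn X y beta gamma s G b th0 al0 u s0 eps t).2) 0)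
  <= 2 * Mx * expR ((`|beta| * C0 ^+ 2 + 2 * CA * (1 + K%:R) + CA) * T) * gamma.
Proof.
move=> g0 d0 hA3 hA4 hX hu hT.
have CA0 := A3_CA hA3.
set c := `|beta| * C0 ^+ 2 + 2 * CA * (1 + K%:R) + CA.
have c0 : 0 <= c.
  rewrite /c; apply: addr_ge0 => //; apply: addr_ge0; first by apply: mulr_ge0; [exact: normr_ge0|exact: sqr_ge0].
  by apply: mulr_ge0; [apply: mulr_ge0|apply: addr_ge0].
set E := expR (c * T).
have Mx0 : 0 <= Mx by exact: le_trans (enorm_ge0 u) hu.
have hpow : (1 + gamma * c) ^+ t <= E.
  apply: le_trans (_ : expR (gamma * c) ^+ t <= _).
    apply: lerXn2r; rewrite ?nnegrE ?expR_ge0 //; first by rewrite addr_ge0 // mulr_ge0 // ltW.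
    exact: expR_ge1Dx.
  rewrite -expRM_natr /E ler_expR.
  have -> : gamma * c * t%:R = c * (t%:R * gamma) by ring.
  by apply: ler_wpM2l.
set L := gamma * Mx * E.
have hD : forall h, Dd X y beta gamma s G b th0 al0 u s0 h 0 t <= L * `|h|.
  move=> h; apply: le_trans (@iter_bound R n d K X y beta gamma s G b th0 al0 u s0 h 0 CA C0 g0 d0 hA3 hA4 hX t) _.
  rewrite -/c subr0; case: ifP => _; last first.
    by rewrite mulr_ge0 ?normr_ge0 // /L !mulr_ge0 ?expR_ge0 // ltW.
  rewrite /L.
  have -> : gamma * `|h| * enorm u * (1 + gamma * c) ^+ t = `|h| * gamma * (enorm u * (1 + gamma * c) ^+ t) by ring.
  have -> : gamma * Mx * E * `|h| = `|h| * gamma * (Mx * E) by ring.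
  apply: ler_wpM2l; first by rewrite mulr_ge0 ?normr_ge0 // ltW.
  apply: le_trans (ler_wpM2r _ hu) _; first by apply: exprn_ge0; rewrite addr_ge0 // mulr_ge0 // ltW.
  by apply: ler_wpM2l.
have sd : 0 < Num.sqrt (d%:R : R) by rewrite sqrtr_gt0 ltr0n.
have h1 : enorm (derive1 (fun eps => (dyn X y beta gamma s G b th0 al0 u s0 eps t).1) 0) <= L.
  apply: deriv_le => h; apply: le_trans (hD h).
  by rewrite /Dd /= lerDl mulr_ge0 ?enorm_ge0 // ltW.
have h2 : enorm (derive1 (fun eps => (dyn X y beta gamma s G b th0 al0 u s0 eps t).2) 0) <= L / Num.sqrt d%:R.
  apply: deriv_le => h; rewrite mulrAC ler_pdivlMr //.
  apply: le_trans (hD h); rewrite /Dd /= mulrC lerDr enorm_ge0 //.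
apply: le_trans (lerD h1 (ler_wpM2l (ltW sd) h2)) _.
apply: eq_le_ok; rewrite /L; field; rewrite gt_eqF //.
Qed.
End F4.
Theorem mainTheorem13 (R : realType) (K : nat) (T C0 beta delta CA : R) :
  0 < T -> 0 < C0 ->
  exists C : R, 0 < C /\
  forall (gamma : R), 0 < gamma ->
  forall (n d : nat) (X : 'M[R]_(n, d)) (y : 'cV[R]_n)
         (s : R -> 'cV[R]_K -> R)
         (G : 'cV[R]_K -> {measure set R -> \bar R} -> 'cV[R]_K)
         (b : nat -> 'cV[R]_d) (th0 : 'cV[R]_d) (al0 : 'cV[R]_K),
    (0 < d)%N ->
    n%:R <= delta * d%:R ->
    A3 CA s -> A4 CA G ->
    opnorm X <= C0 ->
    b 0%N = 0 ->
    forall s0 t : nat, (s0 <= t)%N -> t%:R * gamma <= T ->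
      (forall j : 'I_d,
         let traj := fun eps : R =>
           dyn X y beta gamma s G b th0 al0 (evec j) s0 eps t in
         enorm (derive1 (fun eps => (traj eps).1) 0)
         + Num.sqrt d%:R * enorm (derive1 (fun eps => (traj eps).2) 0)
         <= C * gamma) /\
      (forall i : 'I_n,
         let traj := fun eps : R =>
           dyn X y beta gamma s G b th0 al0 (X^T *m evec i) s0 eps t in
         enorm (derive1 (fun eps => (traj eps).1) 0)
         + Num.sqrt d%:R * enorm (derive1 (fun eps => (traj eps).2) 0)
         <= C * gamma).
Proof.
move=> T0 C00.
set c := `|beta| * C0 ^+ 2 + 2 * CA * (1 + K%:R) + CA.
set Mx := Num.max 1 C0.
have Mx1 : 1 <= Mx by rewrite /Mx le_max lexx.
exists (2 * Mx * expR (c * T)); split.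
  by rewrite !mulr_gt0 ?expR_gt0 // (lt_le_trans ltr01 Mx1).
move=> gamma g0 n d X y s G b th0 al0 d0 hdel hA3 hA4 hX hb s0 t hst hT.
split.
- move=> j; cbv zeta.
  apply: (@main_u R n d K X y beta gamma s G b th0 al0 (evec j) s0 CA C0 T Mx t) => //.
  by rewrite evec_norm.
- move=> i; cbv zeta.
  apply: (@main_u R n d K X y beta gamma s G b th0 al0 (X^T *m evec i) s0 CA C0 T Mx t) => //.
  apply: le_trans (tr_le _ _) _; rewrite evec_norm mulr1.
  by apply: le_trans hX _; rewrite /Mx le_max lexx orbT.
Qed.
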